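(* Let $m,g>0$ and $\epsilon\geq 0$. Consider the planar taut-cable tethered UAV model described in the context, and let $\mathcal{S}_\epsilon$ denote its set of attainable equilibria with safety margin $\epsilon$. Then $\mathcal{S}_\epsilon$ consists exactly of the triples $(\bar r,\bar\alpha,\bar\theta)$ satisfying $\bar r>0$, $\bar\alpha\in[0,\pi]$ and \[ \begin{cases} \bar\theta\in\left(\bar\theta_\epsilon(\bar\alpha),\ \frac{\pi}{2}-\bar\alpha\right) & \text{if } \bar\alpha\in\left[0,\frac{\pi}{2}\right),\\ \bar\theta=0 & \text{if } \bar\alpha=\frac{\pi}{2},\\ \bar\theta\in\left(\frac{\pi}{2}-\bar\alpha,\ \bar\theta_\epsilon(\bar\alpha)\right) & \text{if } \bar\alpha\in\left(\frac{\pi}{2},\pi\right], \end{cases} \] where \[ \bar\theta_\epsilon(\bar\alpha)=\begin{cases}\arctan\left(\frac{\epsilon}{mg\cos\bar\alpha}+\tan\bar\alpha\right)-\bar\alpha & \text{if } \bar\alpha\in\left[0,\frac{\pi}{2}\right),\\[2pt] \arctan\left(\frac{\epsilon}{mg\cos\bar\alpha}+\tan\bar\alpha\right)+\pi-\bar\alpha & \text{if } \bar\alpha\in\left(\frac{\pi}{2},\pi\right],\end{cases} \] with $\arctan$ the principal branch with values in $(-\pi/2,\pi/2)$. Moreover, the cable tension at equilibrium is $\bar T=mg\left(\tan(\bar\alpha+\bar\theta)\cos\bar\alpha-\sin\bar\alpha\right)$ if $\bar\alpha\in[0,\pi]\setminus\{\pi/2\}$, while if $\bar\alpha=\pi/2$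 the equilibrium tension can be any value in $\mathbb{R}_{>0}$ (depending on the constant thrust).
   Context: Model: a planar UAV of mass $m>0$ and moment of inertia $\mathcal{J}>0$, subject to gravity $g>0$, is connected to the ground by a taut cable wound on a winch of radius $\rho>0$ and moment of inertia $\mathcal{I}>0$. Its polar coordinates are the radial position $r>0$ and elevation angle $\alpha\in[0,\pi]$; its pitch angle is $\theta\in(-\pi,\pi]$. Inputs are total thrust $u_1\geq 0$, torque $u_2\in\mathbb{R}$ and winch torque $u_3\in\mathbb{R}$. The taut-cable dynamics are \[ \ddot r=\tfrac{\rho}{\mathcal I}u_3+\tfrac{\rho^2}{\mathcal I}T,\quad \ddot\alpha=-\tfrac{1}{r}\left(2\dot r\dot\alpha+g\cos\alpha\right)+\tfrac{1}{mr}u_1\cos(\alpha+\theta),\quad \ddot\theta=\tfrac{1}{\mathcal J}u_2, \] where the cable tension is $T=mr\dot\alpha^2-mg\sin\alpha+u_1\sin(\alpha+\theta)-m\ddot r$. A triple $(\bar r,\bar\alpha,\bar\theta)$ with $\bar r>0$, $\bar\alpha\in[0,\pi]$, $\bar\theta\in(-\pi,\pi]$ is an equilibrium if there are constant inputs $\bar u_1\geq0,\bar u_2,\bar u_3$ for which the constant trajectory $(r,\alpha,\theta)\equiv(\bar r,\bar\alpha,\bar\theta)$ solves the dynamics; the corresponding equilibrium tension is $\bar T=\bar u_1\sin(\bar\alpha+\bar\theta)-mg\sin\bar\alpha$. Given $\epsilon\geq 0$, the set of attainable equilibria $\mathcal{S}_\epsilon$ is the set of equilibria $(\bar r,\bar\alpha,\bar\theta)$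 admitting such constant inputs with $\bar T>\epsilon$. *)

(* Defs.v *)
From Stdlib Require Import Reals.
From Coquelicot Require Import Coquelicot.
Open Scope R_scope.

(* Physical parameters: mass m, inertia J (UAV), gravity g,
   winch radius rho and winch inertia Iw. *)

Definition tension (m g : R) (r a th ad rdd u1 : R) : R :=
  m * r * ad ^ 2 - m * g * sin a + u1 * sin (a + th) - m * rdd.

Definition solves_dynamics (m J g rho Iw : R) (r a th : R -> R) (u1 u2 u3 : R)
  : Prop :=
  exists rd ad thd rdd add thdd : R -> R,
    forall t : R,
      is_derive r t (rd t) /\ is_derive rd t (rdd t) /\
      is_derive a t (ad t) /\ is_derive ad t (add t) /\
      is_derive th t (thd t) /\ is_derive thd t (thdd t) /\
      rdd t = rho / Iw * u3
              + rho ^ 2 / Iw * tension m g (r t) (a t) (th t) (ad t) (rdd t) u1 /\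
      add t = - (1 / r t) * (2 * rd t * ad t + g * cos (a t))
              + 1 / (m * r t) * u1 * cos (a t + th t) /\
      thdd t = 1 / J * u2.

Definition equilibrium_inputs (m J g rho Iw : R) (rb ab thb u1 u2 u3 : R) : Prop :=
  0 <= u1 /\
  solves_dynamics m J g rho Iw (fun _ => rb) (fun _ => ab) (fun _ => thb) u1 u2 u3.

Definition eq_tension (m g : R) (ab thb u1 : R) : R :=
  u1 * sin (ab + thb) - m * g * sin ab.

Definition state_domain (rb ab thb : R) : Prop :=
  0 < rb /\ 0 <= ab <= PI /\ - PI < thb <= PI.

Definition attainable (m J g rho Iw eps : R) (rb ab thb : R) : Prop :=
  state_domain rb ab thb /\
  exists u1 u2 u3 : R,
    equilibrium_inputs m J g rho Iw rb ab thb u1 u2 u3 /\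
    eps < eq_tension m g ab thb u1.

(* The boundary angle theta_eps(alpha) (only used for alpha <> PI/2). *)
Definition theta_eps (m g eps ab : R) : R :=
  if Rlt_dec ab (PI / 2)
  then atan (eps / (m * g * cos ab) + tan ab) - ab
  else atan (eps / (m * g * cos ab) + tan ab) + PI - ab.

(* Main.v *)
Require Import Defs.
From Stdlib Require Import Reals Lra.
From Coquelicot Require Import Coquelicot.
Open Scope R_scope.

Lemma eq_inputs_char (m J g rho Iw rb ab thb u1 u2 u3 : R) :
  0 < m -> 0 < rb ->
  equilibrium_inputs m J g rho Iw rb ab thb u1 u2 u3 ->
  0 <= u1 /\ u1 * cos (ab + thb) = m * g * cos ab.
Proof.
  intros hm hr [hu [rd [ad [thd [rdd [add [thdd H]]]]]]].
  split; [exact hu|].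
  assert (Hrd : forall t, rd t = 0).
  { intro t. destruct (H t) as [H1 _].
    rewrite <- (is_derive_unique _ _ _ H1). apply Derive_const. }
  assert (Had : forall t, ad t = 0).
  { intro t. destruct (H t) as [_ [_ [H1 _]]].
    rewrite <- (is_derive_unique _ _ _ H1). apply Derive_const. }
  assert (Hadd : add 0 = 0).
  { destruct (H 0) as [_ [_ [_ [H1 _]]]].
    assert (H2 : is_derive (fun _ : R => 0) 0 (add 0)).
    { apply (is_derive_ext ad). intro t; apply Had. exact H1. }
    rewrite <- (is_derive_unique _ _ _ H2). apply Derive_const. }
  destruct (H 0) as [_ [_ [_ [_ [_ [_ [_ [E _]]]]]]]].
  rewrite Hadd, Hrd, Had in E.
  assert (E2 : (m * rb) * 0 = (m*rb) * (- (1 / rb) * (2 * 0 * 0 + g * cos ab) +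
           1 / (m * rb) * u1 * cos (ab + thb))) by (rewrite <- E; reflexivity).
  field_simplify in E2; try lra.
Qed.

Lemma eq_inputs_build (m J g rho Iw rb ab thb u1 : R) :
  0 < m -> 0 < J -> 0 < Iw -> 0 < rb -> 0 <= u1 -> u1 * cos (ab + thb) = m * g * cos ab ->
  equilibrium_inputs m J g rho Iw rb ab thb u1 0 (- rho * eq_tension m g ab thb u1).
Proof.
  intros hm hJ hI hr hu E. split; [exact hu|].
  exists (fun _ => 0), (fun _ => 0), (fun _ => 0), (fun _ => 0), (fun _ => 0), (fun _ => 0).
  intro t.
  assert (D : forall c : R, is_derive (fun _ : R => c) t 0)
    by (intro c; apply (is_derive_const (V:=R_NormedModule))).
  split; [apply D|]. split; [apply D|]. split; [apply D|]. split; [apply D|].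
  split; [apply D|]. split; [apply D|]. split; [|split].
  - unfold tension, eq_tension. field. lra.
  - replace (1 / (m * rb) * u1 * cos (ab + thb)) with (1 / (m * rb) * (u1 * cos (ab + thb))) by ring. rewrite E. field. lra.
  - field. lra.
Qed.

Lemma core_lt (m g eps a th : R) : 0 < m -> 0 < g ->
  0 <= a < PI/2 -> - PI < th <= PI ->
  ((exists u1, 0 <= u1 /\ u1 * cos (a + th) = m * g * cos a /\
     eps < u1 * sin (a + th) - m * g * sin a) <->
   (atan (eps / (m * g * cos a) + tan a) - a < th < PI / 2 - a)).
Proof.
  intros hm hg ha hth.
  assert (hc : 0 < cos a) by (apply cos_gt_0; lra).
  assert (hmg : 0 < m * g) by nra.
  set (K := eps / (m * g * cos a) + tan a).
  assert (HK : m * g * cos a * K = eps + m * g * sin a).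
  { unfold K, tan. field. lra. }
  pose proof (atan_bound K). pose proof PI_RGT_0.
  split.
  - intros [u1 [hu [E T]]].
    assert (hC : 0 < cos (a + th)).
    { destruct (Rle_or_lt (cos (a+th)) 0) as [h|h]; [|exact h].
      exfalso. assert (u1 * cos (a+th) <= 0) by nra. nra. }
    assert (hx : - (PI/2) < a + th < PI/2).
    { split.
      - destruct (Rlt_or_le (-(PI/2)) (a+th)) as [h|h]; [exact h|].
        exfalso. assert (cos (-(a+th)) <= 0) by (apply cos_le_0; lra).
        rewrite cos_neg in H1. lra.
      - destruct (Rlt_or_le (a+th) (PI/2)) as [h|h]; [exact h|].
        exfalso. assert (cos (a+th) <= 0) by (apply cos_le_0; lra). lra. }
    assert (Et : tan (a+th) * cos (a+th) = sin (a+th)) by (unfold tan; field; lra).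
    assert (hT : K < tan (a+th)).
    { apply (Rmult_lt_reg_l (m * g * cos a)); [nra|].
      rewrite HK. rewrite <- E. rewrite <- Et in T. nra. }
    apply atan_increasing in hT. rewrite atan_tan in hT by lra. lra.
  - intros [h1 h2].
    assert (hx : - (PI/2) < a + th < PI/2) by lra.
    assert (hC : 0 < cos (a + th)) by (apply cos_gt_0; lra).
    exists (m * g * cos a / cos (a + th)).
    assert (hT : tan (atan K) < tan (a+th)) by (apply tan_increasing; lra).
    rewrite tan_atan in hT.
    assert (Et : tan (a+th) * cos (a+th) = sin (a+th)) by (unfold tan; field; lra).
    split; [apply Rlt_le, Rdiv_lt_0_compat; nra|].
    split; [field; lra|].
    rewrite <- Et.
    replace (m * g * cos a / cos (a + th) * (tan (a + th) * cos (a + th)))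
      with (m * g * cos a * tan (a+th)) by (field; lra).
    assert (m * g * cos a * K < m * g * cos a * tan (a+th)) by (apply Rmult_lt_compat_l; nra).
    lra.
Qed.

Lemma core_gt (m g eps a th : R) : 0 < m -> 0 < g ->
  PI/2 < a <= PI -> - PI < th <= PI ->
  ((exists u1, 0 <= u1 /\ u1 * cos (a + th) = m * g * cos a /\
     eps < u1 * sin (a + th) - m * g * sin a) <->
   (PI / 2 - a < th < atan (eps / (m * g * cos a) + tan a) + PI - a)).
Proof.
  intros hm hg ha hth.
  pose proof PI_RGT_0.
  assert (hc : cos a < 0) by (apply cos_lt_0; lra).
  assert (hmg : 0 < m * g) by nra.
  set (K := eps / (m * g * cos a) + tan a).
  assert (HK : m * g * cos a * K = eps + m * g * sin a).
  { unfold K, tan. field. lra. }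
  pose proof (atan_bound K).
  set (p := a + th - PI).
  assert (Ec : cos (a + th) = - cos p).
  { unfold p. rewrite <- neg_cos. f_equal. ring. }
  assert (Es : sin (a + th) = - sin p).
  { unfold p. rewrite <- neg_sin. f_equal. ring. }
  rewrite Ec, Es.
  split.
  - intros [u1 [hu [E T]]].
    assert (hC : 0 < cos p).
    { destruct (Rle_or_lt (cos p) 0) as [h|h]; [|exact h].
      exfalso. assert (u1 * - cos p >= 0) by nra. nra. }
    assert (hx : - (PI/2) < p < PI/2).
    { split.
      - destruct (Rlt_or_le (-(PI/2)) p) as [h|h]; [exact h|].
        exfalso. assert (cos (-p) <= 0) by (apply cos_le_0; unfold p in *; lra).
        rewrite cos_neg in H1. lra.
      - destruct (Rlt_or_le p (PI/2)) as [h|h]; [exact h|].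
        exfalso. assert (cos p <= 0) by (apply cos_le_0; unfold p in *; lra). lra. }
    assert (Et : tan p * cos p = sin p) by (unfold tan; field; lra).
    assert (hT : tan p < K).
    { apply (Rmult_lt_reg_l (- (m * g * cos a))); [nra|].
      assert (X : u1 * - sin p = (u1 * - cos p) * tan p) by (rewrite <- Et; ring).
      rewrite E in X. lra. }
    apply atan_increasing in hT. rewrite atan_tan in hT by lra. unfold p in *. lra.
  - intros [h1 h2].
    assert (hx : - (PI/2) < p < PI/2) by (unfold p; lra).
    assert (hC : 0 < cos p) by (apply cos_gt_0; lra).
    exists (- (m * g * cos a) / cos p).
    assert (hT : tan p < tan (atan K)) by (apply tan_increasing; unfold p in *; lra).
    rewrite tan_atan in hT.
    assert (Et : tan p * cos p = sin p) by (unfold tan; field; lra).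
    split; [apply Rlt_le, Rdiv_lt_0_compat; nra|].
    split; [field; lra|].
    rewrite <- Et.
    replace (- (m * g * cos a) / cos p * - (tan p * cos p))
      with (m * g * cos a * tan p) by (field; lra).
    assert (m * g * cos a * K < m * g * cos a * tan p).
    { assert (- (m * g * cos a) * tan p < - (m * g * cos a) * K) by (apply Rmult_lt_compat_l; nra).
      lra. }
    lra.
Qed.

Lemma pi2_theta (m g eps th u1 : R) : 0 < m -> 0 < g -> 0 <= eps -> - PI < th <= PI ->
  0 <= u1 -> u1 * cos (PI/2 + th) = m * g * cos (PI/2) ->
  eps < u1 * sin (PI/2 + th) - m * g * sin (PI/2) -> th = 0.
Proof.
  intros hm hg he hth hu E T.
  rewrite cos_plus, cos_PI2, sin_PI2 in E. rewrite sin_plus, cos_PI2, sin_PI2 in T.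
  assert (hmg : 0 < m * g) by nra.
  assert (hcu : 0 < u1 * cos th) by nra.
  assert (hu1 : 0 < u1).
  { destruct hu as [h|h]; [exact h|]. subst. lra. }
  assert (hs : sin th = 0) by nra.
  destruct (Rtotal_order th 0) as [h|[h|h]]; [|exact h|].
  - pose proof (sin_lt_0_var th ltac:(lra) h). lra.
  - destruct (Req_dec th PI) as [e|ne].
    + subst. rewrite cos_PI in hcu. nra.
    + pose proof (sin_gt_0 th h ltac:(lra)). lra.
Qed.

Theorem proposition1 (m J g rho Iw eps : R)
  (hm : 0 < m) (hJ : 0 < J) (hg : 0 < g) (hrho : 0 < rho) (hI : 0 < Iw)
  (heps : 0 <= eps) :
  (forall rb ab thb : R,
     attainable m J g rho Iw eps rb ab thb <->
     (0 < rb /\ 0 <= ab <= PI /\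
      ((0 <= ab < PI / 2 /\ theta_eps m g eps ab < thb < PI / 2 - ab) \/
       (ab = PI / 2 /\ thb = 0) \/
       (PI / 2 < ab <= PI /\ PI / 2 - ab < thb < theta_eps m g eps ab)))) /\
  (forall rb ab thb u1 u2 u3 : R,
     state_domain rb ab thb -> ab <> PI / 2 ->
     equilibrium_inputs m J g rho Iw rb ab thb u1 u2 u3 ->
     eq_tension m g ab thb u1 = m * g * (tan (ab + thb) * cos ab - sin ab)) /\
  (forall rb thb : R,
     attainable m J g rho Iw eps rb (PI / 2) thb ->
     forall T : R, 0 < T ->
       exists u1 u2 u3 : R,
         equilibrium_inputs m J g rho Iw rb (PI / 2) thb u1 u2 u3 /\
         eq_tension m g (PI / 2) thb u1 = T).
Proof.
  pose proof PI_RGT_0 as hPI.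
  assert (hmg : 0 < m * g) by nra.
  split; [|split].
  - intros rb ab thb. split.
    + intros [[hr [ha hth]] [u1 [u2 [u3 [EI T]]]]].
      destruct (eq_inputs_char _ _ _ _ _ _ _ _ _ _ _ hm hr EI) as [hu E].
      unfold eq_tension in T.
      split; [exact hr|]. split; [exact ha|].
      destruct (total_order_T ab (PI/2)) as [[h|h]|h].
      * left. split; [lra|]. unfold theta_eps.
        destruct (Rlt_dec ab (PI/2)); [|lra].
        apply (core_lt m g eps ab thb hm hg ltac:(lra) hth). exists u1; auto.
      * right; left. split; [exact h|]. subst ab.
        exact (pi2_theta m g eps thb u1 hm hg heps hth hu E T).
      * right; right. split; [lra|]. unfold theta_eps.
        destruct (Rlt_dec ab (PI/2)); [lra|].
        apply (core_gt m g eps ab thb hm hg ltac:(lra) hth). exists u1; auto.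
    + intros [hr [ha [[h1 h2]|[[h1 h2]|[h1 h2]]]]].
      * unfold theta_eps in h2. destruct (Rlt_dec ab (PI/2)); [|lra].
        pose proof (atan_bound (eps / (m * g * cos ab) + tan ab)).
        assert (hth : - PI < thb <= PI) by lra.
        destruct (proj2 (core_lt m g eps ab thb hm hg h1 hth) h2) as [u1 [hu [E T]]].
        split; [split; [exact hr|split; assumption]|].
        exists u1, 0, (- rho * eq_tension m g ab thb u1).
        split; [apply eq_inputs_build; auto|]. exact T.
      * subst ab thb.
        split; [split; [exact hr|split; lra]|].
        exists (m * g + eps + 1), 0, (- rho * eq_tension m g (PI/2) 0 (m * g + eps + 1)).
        split.
        -- apply eq_inputs_build; auto; try lra.
           rewrite Rplus_0_r, cos_PI2. ring.
        -- unfold eq_tension. rewrite Rplus_0_r, sin_PI2. lra.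
      * unfold theta_eps in h2. destruct (Rlt_dec ab (PI/2)); [lra|].
        pose proof (atan_bound (eps / (m * g * cos ab) + tan ab)).
        assert (hth : - PI < thb <= PI) by lra.
        destruct (proj2 (core_gt m g eps ab thb hm hg h1 hth) h2) as [u1 [hu [E T]]].
        split; [split; [exact hr|split; assumption]|].
        exists u1, 0, (- rho * eq_tension m g ab thb u1).
        split; [apply eq_inputs_build; auto|]. exact T.
  - intros rb ab thb u1 u2 u3 [hr [ha hth]] hne EI.
    destruct (eq_inputs_char _ _ _ _ _ _ _ _ _ _ _ hm hr EI) as [hu E].
    assert (hc : cos ab <> 0).
    { destruct (total_order_T ab (PI/2)) as [[h|h]|h].
      - pose proof (cos_gt_0 ab ltac:(lra) h). lra.
      - contradiction.
      - pose proof (cos_lt_0 ab h ltac:(lra)). lra. }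
    assert (hC : cos (ab + thb) <> 0).
    { intro h0. rewrite h0, Rmult_0_r in E. apply hc.
      apply (Rmult_eq_reg_l (m * g)); lra. }
    unfold eq_tension, tan.
    assert (u1 = m * g * cos ab / cos (ab + thb)) by (rewrite <- E; field; exact hC).
    subst u1. field. exact hC.
  - intros rb thb [[hr [ha hth]] [u1 [u2 [u3 [EI T]]]]] Tv hT.
    destruct (eq_inputs_char _ _ _ _ _ _ _ _ _ _ _ hm hr EI) as [hu E].
    unfold eq_tension in T.
    pose proof (pi2_theta m g eps thb u1 hm hg heps hth hu E T). subst thb.
    exists (Tv + m * g), 0, (- rho * eq_tension m g (PI/2) 0 (Tv + m * g)).
    split.
    + apply eq_inputs_build; auto; try lra.
      rewrite Rplus_0_r, cos_PI2. ring.
    + unfold eq_tension. rewrite Rplus_0_r, sin_PI2. ring.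
Qed.
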